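(* Let $X$ be a proper metric space with $\operatorname{trasind} X=\alpha$ for some ordinal number $\alpha$. Then for each ordinal $\beta<\alpha$ there exists a subset $X_\beta\subset X$ (with the restricted metric) such that $\operatorname{trasind} X_\beta=\beta$.
   Context: A metric space is proper if every closed ball is compact; each such space $X$ has a fixed base point $x_0$, with metric $d$. A map $\phi:X\to[0,1]$ is slowly oscillating if for every $r>0$ and $\varepsilon>0$ there is $D>0$ with $\operatorname{diam}\phi(B_r(x))<\varepsilon$ whenever $d(x,x_0)\ge D$, where $B_r(x)$ is the open $r$-ball. The Higson compactification $cX$ is the closure of the image of $X$ under $x\mapsto(\phi(x))_{\phi\in C_h(X)}\in[0,1]^{C_h(X)}$, where $C_h(X)$ is the set of continuous slowly oscillating maps $X\to[0,1]$; the Higson corona is $\nu X=cX\setminus X$. For $C\subset X$, $C'=\operatorname{cl}_{cX}C\cap\nu X$. A partition between disjoint closed sets $P,Q$ of a space $Z$ is a set $S\subset Z$ such that $Z\setminus S=U_1\cup U_2$ with $U_1,U_2$ disjoint open, $P\subset U_1$, $Q\subset U_2$. For $x\in\nu X$ and $A\subset X$ with $x\notin A'$, a set $C\subset X$ is an asymptotic separator for $x$ and $A$ if $C'$ is a partition between $\{x\}$ and $A'$ in $\nu X$. The transfinite dimension $\operatorname{trasind}$: $\operatorname{trasind} X=-1$ iff $X$ is bounded; for an ordinal $\alpha$, $\operatorname{trasind} X\le\alpha$ iff for every $x\in\nu X$ and $A\subset X$ with $x\notin A'$ there is an asymptotic separator $C$ for $x$ and $A$ with $\operatorname{trasind} C\le\beta$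 for some $\beta<\alpha$; $\operatorname{trasind} X=\alpha$ iff $\operatorname{trasind} X\le\alpha$ but not $\operatorname{trasind}X\le\beta$ for any $\beta<\alpha$; $\operatorname{trasind} X=\infty$ if $\operatorname{trasind} X\le\alpha$ holds for no ordinal $\alpha$. *)

(* Defs.v *)
From HB Require Import structures.
From mathcomp Require Import all_boot all_order all_algebra.
From mathcomp Require Import all_classical all_reals all_analysis.
Set Implicit Arguments. Unset Strict Implicit. Unset Printing Implicit Defensive.
Import Order.TTheory GRing.Theory Num.Theory.
Import numFieldNormedType.Exports.
Local Open Scope classical_set_scope.
Local Open Scope ring_scope.

Section Higson.
Variables (R : realType) (T : Type) (d : T -> T -> R) (x0 : T).

Definition is_metric : Prop :=
  [/\ forall x y, 0 <= d x y,
      forall x y, d x y = 0 <-> x = y,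
      forall x y, d x y = d y x &
      forall x y z, d x z <= d x y + d y z].

Definition d_open (U : set T) : Prop :=
  forall x, U x -> exists2 r : R, 0 < r & [set y | d x y < r] `<=` U.

Definition d_compact (K : set T) : Prop :=
  forall F : set (set T), (forall U, F U -> d_open U) -> K `<=` \bigcup_(U in F) U ->
    exists s : seq (set T), (forall U, U \in s -> F U) /\
      K `<=` \bigcup_(U in [set U | U \in s]) U.

Definition proper_metric : Prop :=
  forall (x : T) (r : R), d_compact [set y | d x y <= r].

Definition bounded_set (S : set T) : Prop :=
  exists M : R, forall x y, S x -> S y -> d x y <= M.

Definition diamR (A : set R) : \bar R :=
  ereal_sup [set (`|a - b|)%:E | a in A & b in A].

(* Continuous slowly oscillating maps S -> [0,1], for the subspace S of T with
   the restricted metric (represented by functions T -> R; only values on S matter). *)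
Definition higson_fun (S : set T) (f : T -> R) : Prop :=
  [/\ forall x, S x -> 0 <= f x <= 1,
      forall x, S x -> forall e : R, 0 < e -> exists2 del : R, 0 < del &
        forall y, S y -> d x y < del -> `|f x - f y| < e &
      forall r e : R, 0 < r -> 0 < e -> exists2 D : R, 0 < D &
        forall x, S x -> D <= d x x0 ->
          (diamR (f @` [set y | S y /\ (d x y < r)%R]) < e%:E)%E].

Definition CH (S : set T) := {f : T -> R | higson_fun S f}.

(* the product [0,1]^{C_h(S)} (inside R^{C_h(S)}) with the product topology *)
Definition prodH (S : set T) : topologicalType := [the topologicalType of {ptws CH S -> R}].

Definition hemb (S : set T) (x : T) : prodH S := fun f => proj1_sig f x.
Arguments hemb : clear implicits.

(* Higson compactification cS, Higson corona nu S, and C' for C ⊆ S *)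
Definition hcompact (S : set T) : set (prodH S) := closure (hemb S @` S).
Arguments hcompact : clear implicits.
Definition corona (S : set T) : set (prodH S) := hcompact S `\` (hemb S @` S).
Arguments corona : clear implicits.
Definition trace (S C : set T) : set (prodH S) := closure (hemb S @` C) `&` corona S.
Arguments trace : clear implicits.

(* Z \ Sep = U1 ∪ U2 with U1, U2 disjoint open in Z, P ⊆ U1, Q ⊆ U2;
   relatively open subsets of Z are traces of open subsets of the product *)

Definition partition_in (S : set T) (Z Sep P Q : set (prodH S)) : Prop :=
  exists U1 U2 : set (prodH S),
    [/\ open U1 /\ open U2, U1 `&` U2 `&` Z = set0,
        Z `\` Sep = (U1 `|` U2) `&` Z, P `<=` U1 & Q `<=` U2].

Arguments partition_in : clear implicits.

Definition asymptotic_separator (S : set T) (p : prodH S) (A C : set T) : Prop :=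
  C `<=` S /\ partition_in S (corona S) (trace S C) [set p] (trace S A).

(* trasind, with ordinals represented as elements of a well-ordered type W
   (with strict order lt); "-1" is handled separately as boundedness. *)
Variables (W : Type) (lt : W -> W -> Prop).

Definition well_order : Prop :=
  [/\ well_founded lt,
      forall a b c, lt a b -> lt b c -> lt a c &
      forall a b, lt a b \/ a = b \/ lt b a].

Inductive trasind_le : W -> set T -> Prop :=
| TrasindLe (a : W) (S : set T) :
    (forall (p : prodH S) (A : set T), A `<=` S -> corona S p -> ~ trace S A p ->
       exists C : set T, asymptotic_separator p A C /\
         (bounded_set C \/ exists b : W, lt b a /\ trasind_le b C)) ->
    trasind_le a S.

(* trasind S = a (a an ordinal, so trasind S <> -1, i.e. S unbounded) *)
Definition trasind_eq (a : W) (S : set T) : Prop :=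
  [/\ trasind_le a S, ~ bounded_set S & forall b, lt b a -> ~ trasind_le b S].

End Higson.

(* Main.v *)
Require Import Defs.
From HB Require Import structures.
From mathcomp Require Import all_boot all_order all_algebra.
From mathcomp Require Import all_classical all_reals all_analysis.
From Stdlib Require Import Classical.
Import numFieldNormedType.Exports.
Local Open Scope classical_set_scope.

Lemma wf_min (W : Type) (lt : W -> W -> Prop) (hwf : well_founded lt)
  (P : W -> Prop) (c : W) : P c -> exists m, P m /\ forall c', lt c' m -> ~ P c'.
Proof.
move: c; apply: (well_founded_induction hwf) => c IH Pc.
case: (classic (exists c', lt c' c /\ P c')) => [[c' [h1 h2]]|hn].
  exact: (IH c' h1 h2).
exists c; split=> // c' h1 h2; apply: hn; by exists c'.
Qed.

Lemma gen (R : realType) (T : Type) (d : T -> T -> R) (x0 : T)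
    (W : Type) (lt : W -> W -> Prop) (hW : well_order lt) (a : W) :
  forall S, trasind_eq d x0 lt a S ->
  forall b : W, lt b a -> exists Xb : set T, trasind_eq d x0 lt b Xb.
Proof.
case: hW => hwf htr htri.
move: a; apply: (well_founded_induction hwf) => a IH S [hle hnb hmin] b hba.
have hnot := hmin b hba.
have [p [A [hAS [hcor [htr' hno]]]]] : exists (p : prodH d x0 S) A, A `<=` S /\ corona (d:=d) (x0:=x0) (S:=S) p /\
   ~ trace (d:=d) (x0:=x0) (S:=S) A p /\ ~ (exists C, asymptotic_separator (S:=S) p A C /\
         (Defs.bounded_set d C \/ exists c, lt c b /\ trasind_le d x0 lt c C)).
  apply: NNPP => hn; apply: hnot; constructor => p A h1 h2 h3.
  apply: NNPP => h4; apply: hn; exists p, A; by split.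
inversion hle as [a' S' hsep]; subst.
have [C [hC [hCb|[c [hca hcC]]]]] := hsep p A hAS hcor htr'.
  by exfalso; apply: hno; exists C; split=> //; left.
have [m [hmC hmmin]] := @wf_min _ _ hwf (fun c => trasind_le d x0 lt c C) c hcC.
have hCnb : ~ Defs.bounded_set d C by move=> hb; apply: hno; exists C; split=> //; left.
have hmb : ~ lt m b by move=> hmb; apply: hno; exists C; split=> //; right; exists m.
have hma : lt m a.
  case: (htri m c) => [h|[h|h]]; first exact: htr h hca.
    by subst.
  by exfalso; exact: hmmin _ h hcC.
case: (htri m b) => [h|[h|h]]; first by exfalso.
  subst; exists C; split=> //.
exact: (IH m hma C (And3 hmC hCnb hmmin) b h).
Qed.

Theorem lemma1 (R : realType) (T : Type) (d : T -> T -> R) (x0 : T)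
    (hd : is_metric d) (hp : proper_metric d)
    (W : Type) (lt : W -> W -> Prop) (hW : well_order lt) (a : W) :
  trasind_eq d x0 lt a setT ->
  forall b : W, lt b a -> exists Xb : set T, trasind_eq d x0 lt b Xb.
Proof. exact: (@gen R T d x0 W lt hW a setT). Qed.
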